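(* Let $d\geq 1$ be an integer and let $G$ be a connected bipartite graph with $|V(G)|\geq 2d+2$ and $\alpha(G)\geq d+1$. Then there exists a set $S\subseteq E(G)$ with $|S|\leq 2d+1$ such that $\alpha(G/S)\leq \alpha(G)-d$. In other words, $(G,2d+1)$ is a yes-instance of $d$-Contraction Blocker$(\alpha)$.
   Context: $\alpha(G)$ denotes the independence number of $G$, i.e. the maximum size of a set of pairwise non-adjacent vertices. For $S\subseteq E(G)$, $G/S$ is the graph obtained from $G$ by contracting every edge of $S$. Equivalently, the vertices of $G/S$ correspond to the connected components of the spanning subgraph $(V(G),S)$, and two such vertices are adjacent iff some vertex of the one component is adjacent in $G$ to some vertex of the other. $d$-Contraction Blocker$(\pi)$ (for fixed $d\ge 1$) takes a graph $G$ and an integer $k$ and asks whether there is $S\subseteq E(G)$ with $|S|\le k$ and $\pi(G/S)\le \pi(G)-d$. *)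

(* Defs.v *)
From mathcomp Require Import all_boot.
Set Implicit Arguments. Unset Strict Implicit. Unset Printing Implicit Defensive.

Definition simple_graph (T : finType) (e : rel T) : Prop :=
  symmetric e /\ irreflexive e.

Definition edges (T : finType) (e : rel T) : {set {set T}} :=
  [set [set p.1; p.2] | p : T * T & e p.1 p.2].

Definition connected_graph (T : finType) (e : rel T) : Prop :=
  forall x y : T, connect e x y.

Definition bipartite (T : finType) (e : rel T) : Prop :=
  exists f : T -> bool, forall x y, e x y -> f x != f y.

Definition independent (T : finType) (e : rel T) (A : {set T}) : bool :=
  [forall x in A, forall y in A, ~~ e x y].

Definition alpha (T : finType) (e : rel T) : nat :=
  \max_(A : {set T} | independent e A) #|A|.

(* Contraction G/S: vertices are the connected components of (V(G), S). *)
Definition srel (T : finType) (S : {set {set T}}) : rel T :=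
  fun x y => [set x; y] \in S.

Definition comps (T : finType) (S : {set {set T}}) : {set {set T}} :=
  [set [set y | connect (srel S) x y] | x : T].

Definition cadj (T : finType) (e : rel T) (C D : {set T}) : bool :=
  [exists x in C, exists y in D, e x y].

Definition cindependent (T : finType) (e : rel T) (S : {set {set T}})
  (I : {set {set T}}) : bool :=
  (I \subset comps S) &&
  [forall C in I, forall D in I, (C != D) ==> ~~ cadj e C D].

Definition alpha_contr (T : finType) (e : rel T) (S : {set {set T}}) : nat :=
  \max_(I : {set {set T}} | cindependent e S I) #|I|.

(* Main.v *)
Require Import Defs.
From mathcomp Require Import all_boot zify.
Set Implicit Arguments. Unset Strict Implicit. Unset Printing Implicit Defensive.

Definition matchingP (T : finType) (e : rel T) (col : T -> bool) (M : {set T * T}) : Prop :=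
  [/\ (forall p, p \in M -> e p.1 p.2 /\ col p.1),
      {in M &, injective (fun p : T * T => p.1)} &
      {in M &, injective (fun p : T * T => p.2)}].

Definition coverP (T : finType) (e : rel T) (X : {set T}) : Prop :=
  forall x y, e x y -> (x \in X) || (y \in X).

Lemma pairs_lt (T : finType) (e e' : rel T) u v n :
  (forall x y, e' x y -> e x y) -> e u v -> ~~ e' u v ->
  #|[set p : T * T | e p.1 p.2]| <= n.+1 -> #|[set p : T * T | e' p.1 p.2]| <= n.
Proof.
move=> sub euv ne' H.
have : [set p : T * T | e' p.1 p.2] \subset [set p : T * T | e p.1 p.2] :\ (u, v).
  apply/subsetP => -[x y]; rewrite !inE /= => exy; rewrite (sub _ _ exy) andbT.
  by apply/eqP => -[ex ey]; subst; rewrite exy in ne'.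
move/subset_leq_card => L.
have := cardsD1 (u, v) [set p : T * T | e p.1 p.2]; rewrite inE /= euv => E.
rewrite /= in E; move: E L H; set a := #|_|; set b := #|_|; set c := #|_|. move=> E L H. lia.
Qed.

Lemma Ycover (T : finType) (e : rel T) (col : T -> bool) (X1 X2 : {set T}) u v :
  (forall x y, e x y -> col x != col y) -> col u -> e u v ->
  (forall x y, e x y -> (x, y) != (u, v) -> (x, y) != (v, u) -> (x \in X1) || (y \in X1)) ->
  (forall x y, e x y -> x \notin [set u; v] -> y \notin [set u; v] -> (x \in X2) || (y \in X2)) ->
  u \notin X1 -> v \notin X1 ->
  coverP e (u |: [set z | if col z then (z \in X1) || (z \in X2) else (z \in X1) && (z \in X2)]).
Proof.
move=> Hcol cu euv H1 H2 u1 v1 x y exy; rewrite !inE.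
have cv : col v = false by move: (Hcol _ _ euv); rewrite cu; case: (col v).
have uv : u != v by apply/eqP => E; rewrite E cv in cu.
case: (eqVneq x u) => [->|xu]; first by rewrite ?eqxx.
case: (eqVneq y u) => [->|yu]; first by rewrite ?eqxx ?orbT.
have cxy := Hcol _ _ exy.
case: (eqVneq x v) => [exv|xv].
  subst x.
  have := H1 _ _ exy; rewrite (negbTE v1) /=.
  have cy : col y by move: cxy; rewrite cv; case: (col y).
  rewrite cy => ->; rewrite ?orbT //.
  - by apply/eqP => -[E]; rewrite E eqxx in uv.
  - by apply/eqP => -[E]; rewrite E eqxx in yu.
case: (eqVneq y v) => [eyv|yv].
  subst y.
  have := H1 _ _ exy; rewrite (negbTE v1) /= orbF.
  have cx : col x by move: cxy; rewrite cv; case: (col x).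
  rewrite cx => ->; rewrite ?orbT //.
  - by apply/eqP => -[E]; rewrite E eqxx in xu.
  - by apply/eqP => -[E]; rewrite E eqxx in xv.
have := H1 _ _ exy; have := H2 _ _ exy.
rewrite !inE (negbTE xu) (negbTE xv) (negbTE yu) (negbTE yv).
have -> : (x, y) != (u, v) by apply/eqP => -[E]; rewrite E eqxx in xu.
have -> : (x, y) != (v, u) by apply/eqP => -[E]; rewrite E eqxx in xv.
move=> /(_ isT isT) A /(_ isT isT) B.
move: A B cxy; case: (col x); case: (col y);
  case: (x \in X1); case: (x \in X2); case: (y \in X1); case: (y \in X2) => //.
Qed.

Lemma matching_sub (T : finType) (e e' : rel T) col M :
  (forall x y, e' x y -> e x y) -> matchingP e' col M -> matchingP e col M.
Proof. by move=> sub [H1 H2 H3]; split=> // p /H1 [/sub]. Qed.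

Lemma konig (T : finType) (col : T -> bool) (n : nat) : forall e : rel T,
  #|[set p : T * T | e p.1 p.2]| <= n -> symmetric e ->
  (forall x y, e x y -> col x != col y) ->
  exists M X, [/\ matchingP e col M, coverP e X & #|X| <= #|M|].
Proof.
elim: n => [|n IH] e He Hsym Hcol.
  exists set0, set0; split; [by split => // p; rewrite inE | | by rewrite !cards0].
  move=> x y exy; move: He; rewrite leqn0 => /eqP/card0_eq /(_ (x, y)); by rewrite !inE /= exy.
case: (pickP [pred p : T * T | e p.1 p.2]) => [[u0 v0] /= E0 | none]; last first.
  exists set0, set0; split; [by split => // p; rewrite inE | | by rewrite !cards0].
  by move=> x y exy; have := none (x, y); rewrite /= exy.
suff main : forall u v, e u v -> col u ->
    exists M X, [/\ matchingP e col M, coverP e X & #|X| <= #|M|].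
  case cu0 : (col u0); first exact: (main u0 v0).
  apply: (main v0 u0); first by rewrite Hsym.
  by move: (Hcol _ _ E0); rewrite cu0; case: (col v0).
move=> u v euv cu.
have cv : col v = false by move: (Hcol _ _ euv); rewrite cu; case: (col v).
have uv : u != v by apply/eqP => E; rewrite E cv in cu.
pose e1 := [rel x y | e x y && ~~ (((x == u) && (y == v)) || ((x == v) && (y == u)))].
pose e2 := [rel x y | [&& e x y, x \notin [set u; v] & y \notin [set u; v]]].
have s1 : forall x y, e1 x y -> e x y by move=> x y /andP[].
have s2 : forall x y, e2 x y -> e x y by move=> x y /andP[].
have [M1 [X1 [mM1 cX1 cM1]]] : exists M X, [/\ matchingP e1 col M, coverP e1 X & #|X| <= #|M|].
  apply: IH.
  - by apply: (pairs_lt s1 euv) => //; rewrite /e1 /= !eqxx /= andbF.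
  - move=> x y /=; rewrite Hsym; congr (_ && ~~ _).
    by case: (x == u); case: (y == v); case: (x == v); case: (y == u).
  - by move=> x y /s1 /Hcol.
have [M2 [X2 [mM2 cX2 cM2]]] : exists M X, [/\ matchingP e2 col M, coverP e2 X & #|X| <= #|M|].
  apply: IH.
  - by apply: (pairs_lt s2 euv) => //; rewrite /e2 /= !inE !eqxx /= andbF.
  - move=> x y /=; rewrite Hsym.
    by case: (x \notin _); case: (y \notin _); rewrite ?andbF ?andbT.
  - by move=> x y /s2 /Hcol.
have cov1 : forall x y, e x y -> (x, y) != (u, v) -> (x, y) != (v, u) -> (x \in X1) || (y \in X1).
  move=> x y exy n1 n2; apply: cX1; rewrite /= exy /=.
  apply/negP => /orP[] /andP[/eqP ex /eqP ey].
  - by rewrite ex ey eqxx in n1.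
  - by rewrite ex ey eqxx in n2.
have cov2 : forall x y, e x y -> x \notin [set u; v] -> y \notin [set u; v] -> (x \in X2) || (y \in X2).
  by move=> x y exy nx ny; apply: cX2; rewrite /= exy nx ny.
case: (boolP ((u \in X1) || (v \in X1))) => [uvX | ].
  exists M1, X1; split => //; first exact: matching_sub mM1.
  move=> x y exy.
  case: (boolP ((x, y) == (u, v))) => [/eqP [-> ->] // | n1].
  case: (boolP ((x, y) == (v, u))) => [/eqP [-> ->] | n2]; first by rewrite orbC.
  exact: cov1.
rewrite negb_or => /andP[u1 v1].
case: (leqP #|M1| #|M2|) => [le12 | lt21].
  exists ((u, v) |: M2), (u |: X1); split.
  - case: mM2 => A B C; split.
    + move=> p; rewrite !inE => /orP[/eqP -> | /A [/s2 ep cp]] //.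
    + move=> p q; rewrite !inE => /orP[/eqP -> | pM] /orP[/eqP -> | qM] //=.
      * move=> E; have [/and3P[_ /negP nq _] _] := A q qM.
        by case: nq; rewrite -E !inE eqxx.
      * move=> E; have [/and3P[_ /negP np _] _] := A p pM.
        by case: np; rewrite E !inE eqxx.
      * exact: B.
    + move=> p q; rewrite !inE => /orP[/eqP -> | pM] /orP[/eqP -> | qM] //=.
      * move=> E; have [/and3P[_ _ /negP nq] _] := A q qM.
        by case: nq; rewrite -E !inE eqxx orbT.
      * move=> E; have [/and3P[_ _ /negP np] _] := A p pM.
        by case: np; rewrite E !inE eqxx orbT.
      * exact: C.
  - move=> x y exy; rewrite !inE.
    case: (boolP ((x, y) == (u, v))) => [/eqP [-> ->] | n1]; first by rewrite eqxx.
    case: (boolP ((x, y) == (v, u))) => [/eqP [-> ->] | n2]; first by rewrite eqxx orbT.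
    have := cov1 _ _ exy n1 n2; case/orP => ->; by rewrite ?orbT.
  - have h1 := cardsU1 u X1; have h2 := cardsU1 (u, v) M2.
    have : (u, v) \notin M2.
      case: mM2 => A _ _; apply/negP => /A [/and3P[_ /negP nq _] _]; apply: nq; by rewrite !inE eqxx.
    move=> nM; rewrite nM /= in h2.
    have H := leq_trans cM1 le12; rewrite h2 (cardsU1 u X1); case: (u \in X1) => /=; [by rewrite add0n add1n leqW | by rewrite leq_add2l].
pose Z1 := [set z | if col z then (z \in X1) || (z \in X2) else (z \in X1) && (z \in X2)].
pose Z2 := [set z | if ~~ col z then (z \in X1) || (z \in X2) else (z \in X1) && (z \in X2)].
pose Y1 := u |: Z1.
pose Y2 := v |: Z2.
have cY1 : coverP e Y1 by exact: (Ycover Hcol cu euv cov1 cov2 u1 v1).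
have cY2 : coverP e Y2.
  have HcolN : forall x y, e x y -> ~~ col x != ~~ col y.
    by move=> x y /Hcol; case: (col x); case: (col y).
  have cvN : ~~ col v by rewrite cv.
  have evu : e v u by rewrite Hsym.
  have cov1' : forall x y, e x y -> (x, y) != (v, u) -> (x, y) != (u, v) -> (x \in X1) || (y \in X1).
    by move=> x y exy n1 n2; apply: cov1.
  have cov2' : forall x y, e x y -> x \notin [set v; u] -> y \notin [set v; u] -> (x \in X2) || (y \in X2).
    by move=> x y exy; rewrite setUC; apply: cov2.
  exact: (@Ycover _ e (fun z => ~~ col z) X1 X2 v u HcolN cvN evu cov1' cov2' v1 u1).
have eU : Z1 :|: Z2 = X1 :|: X2.
  apply/setP => z; rewrite !inE; case: (col z); case: (z \in X1); case: (z \in X2) => //.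
have eI : Z1 :&: Z2 = X1 :&: X2.
  apply/setP => z; rewrite !inE; case: (col z); case: (z \in X1); case: (z \in X2) => //.
have sZ : #|Z1| + #|Z2| = #|X1| + #|X2| by rewrite -cardsUI eU eI cardsUI.
have hY1 : #|Y1| <= #|Z1| + 1 by rewrite cardsU1 addnC leq_add2l; case: (u \in Z1).
have hY2 : #|Y2| <= #|Z2| + 1 by rewrite cardsU1 addnC leq_add2l; case: (v \in Z2).
case: (leqP #|Y1| #|M1|) => [h | h].
  exists M1, Y1; split => //; exact: matching_sub mM1.
exists M1, Y2; split => //; first exact: matching_sub mM1.
move: hY1 hY2 sZ h lt21 cM1 cM2; set a := #|Y1|; set b := #|Y2|; set c := #|Z1|; set d := #|Z2|.
set f := #|X1|; set g := #|X2|; set h1 := #|M1|; set h2 := #|M2|; lia.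
Qed.

Lemma indep_intro (T : finType) (e : rel T) (A : {set T}) :
  (forall x y, x \in A -> y \in A -> ~~ e x y) -> independent e A.
Proof.
move=> H; apply/forallP => x; apply/implyP => xA; apply/forallP => y; apply/implyP => yA.
exact: H.
Qed.

Lemma indep_elim (T : finType) (e : rel T) (A : {set T}) x y :
  independent e A -> x \in A -> y \in A -> ~~ e x y.
Proof.
by move/forallP/(_ x)/implyP => H /H /forallP/(_ y)/implyP H2 /H2.
Qed.

Lemma indep_le_alpha (T : finType) (e : rel T) (A : {set T}) :
  independent e A -> #|A| <= alpha e.
Proof. move=> H; exact: (@leq_bigmax_cond _ (fun B => independent e B) (fun B => #|B|) A). Qed.

Definition touch (T : finType) (M : {set T * T}) (W : {set T}) :=
  [set p in M | (p.1 \in W) || (p.2 \in W)].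

Lemma col12 (T : finType) (e : rel T) col M p :
  (forall x y, e x y -> col x != col y) -> matchingP e col M -> p \in M ->
  col p.1 /\ col p.2 = false.
Proof.
move=> Hcol [A _ _] /A [/Hcol H c1]; split => //.
by move: H; rewrite c1; case: (col p.2).
Qed.

Lemma uniq_pair (T : finType) (e : rel T) col M p q y :
  (forall x y, e x y -> col x != col y) -> matchingP e col M -> p \in M -> q \in M ->
  (p.1 == y) || (p.2 == y) -> (q.1 == y) || (q.2 == y) -> p = q.
Proof.
move=> Hcol mM pM qM.
have [cp1 cp2] := col12 Hcol mM pM; have [cq1 cq2] := col12 Hcol mM qM.
case: mM => _ I1 I2.
case/orP => /eqP Ep; case/orP => /eqP Eq.
- by apply: I1 => //; rewrite Ep Eq.
- by move: cp1; rewrite Ep -Eq cq2.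
- by move: cq1; rewrite Eq -Ep cp2.
- by apply: I2 => //; rewrite Ep Eq.
Qed.

Lemma at_le1 (T : finType) (e : rel T) col M y :
  (forall x y, e x y -> col x != col y) -> matchingP e col M ->
  #|[set p in M | (p.1 == y) || (p.2 == y)]| <= 1.
Proof.
move=> Hcol mM; apply/card_le1_eqP => p q; rewrite !inE => /andP[pM hp] /andP[qM hq].
exact: (uniq_pair Hcol mM qM pM hq hp).
Qed.

Lemma touch_add (T : finType) (M : {set T * T}) W x :
  touch M (x |: W) \subset touch M W :|: [set p in M | (p.1 == x) || (p.2 == x)].
Proof.
apply/subsetP => p; rewrite !inE => /andP[-> /=].
by case: (p.1 == x); case: (p.1 \in W); case: (p.2 == x); case: (p.2 \in W).
Qed.

Lemma touch_closed (T : finType) (e : rel T) col M (W : {set T}) :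
  (forall x y, e x y -> col x != col y) -> matchingP e col M ->
  (forall p, p \in touch M W -> (p.1 \in W) && (p.2 \in W)) ->
  2 * #|touch M W| <= #|W|.
Proof.
move=> Hcol mM H.
have sub : touch M W \subset M by apply/subsetP => p; rewrite inE => /andP[].
have mM' := mM; case: mM' => _ I1 I2.
have i1 : {in touch M W &, injective (fun p : T * T => p.1)}.
  by move=> p q /(subsetP sub) pM /(subsetP sub) qM; apply: I1.
have i2 : {in touch M W &, injective (fun p : T * T => p.2)}.
  by move=> p q /(subsetP sub) pM /(subsetP sub) qM; apply: I2.
have c1 := card_in_imset i1; have c2 := card_in_imset i2.
set A1 := [set p.1 | p in touch M W] in c1; set A2 := [set p.2 | p in touch M W] in c2.
have dis : A1 :&: A2 = set0.
  apply/setP => z; rewrite !inE; apply/negP => /andP[/imsetP[p pT ->] /imsetP[q qT E]].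
  have [cp _] := col12 Hcol mM (subsetP sub _ pT); have [_ cq] := col12 Hcol mM (subsetP sub _ qT).
  by move: cp; rewrite E cq.
have sW : A1 :|: A2 \subset W.
  apply/subsetP => z; rewrite inE => /orP[] /imsetP[p pT ->]; by case/andP: (H p pT).
have := cardsUI A1 A2; rewrite dis cards0 addn0 => E.
have := subset_leq_card sW; rewrite E c1 c2; lia.
Qed.

Lemma crossing (T : finType) (e : rel T) (W : {set T}) w0 z :
  symmetric e -> connected_graph e -> w0 \in W -> z \notin W ->
  exists w x, [/\ w \in W, x \notin W & e w x].
Proof.
move=> Hsym Hc w0W zW.
case: (pickP [pred p : T * T | [&& p.1 \in W, p.2 \notin W & e p.1 p.2]]) => [[w x] /and3P[H1 H2 H3] | none].
  by exists w, x.
have cl : closed e W.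
  move=> a b eab; apply/idP/idP => H.
  - apply/negPn/negP => nb; have := none (a, b); by rewrite /= H nb eab.
  - apply/negPn/negP => na; have := none (b, a); by rewrite /= H na Hsym eab.
have := closed_connect cl (Hc w0 z); by rewrite w0W (negbTE zW).
Qed.

Definition inv (T : finType) (e : rel T) (M : {set T * T}) (k : nat) (W : {set T}) (S : {set {set T}}) :=
  [/\ #|W| = k, (S \subset edges e) && (#|S| < k),
      (forall s, s \in S -> s \subset W),
      (forall x y, x \in W -> y \in W -> connect (srel S) x y) &
      2 * #|touch M W| <= k + 1].

Lemma edge_in (T : finType) (e : rel T) w x : e w x -> [set w; x] \in edges e.
Proof. move=> ewx; apply/imsetP; exists (w, x) => //; by rewrite inE /=. Qed.

Lemma extend (T : finType) (e : rel T) (M : {set T * T}) k W S w x :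
  inv e M k W S -> w \in W -> x \notin W -> e w x ->
  2 * #|touch M (x |: W)| <= k.+1 + 1 ->
  inv e M k.+1 (x |: W) ([set w; x] |: S).
Proof.
move=> [cW /andP[sS cS] inS con _] wW xW ewx tb; split => //.
- by rewrite cardsU1 xW cW.
- rewrite subUset sub1set edge_in //= sS /=.
  by rewrite cardsU1; case: (_ \in S) => /=; rewrite ltnS // ltnW.
- move=> s; rewrite !inE => /orP[/eqP -> | /inS sW].
    by apply/subsetP => z; rewrite !inE => /orP[] /eqP ->; rewrite ?wW ?eqxx ?orbT.
  by apply: (subset_trans sW); apply/subsetP => z zW; rewrite inE zW orbT.
- have sub : forall a b, connect (srel S) a b -> connect (srel ([set w; x] |: S)) a b.
    apply: connect_sub => a b sab; apply: connect1; move: sab; rewrite /srel inE => ->; rewrite orbT //.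
  have wx : connect (srel ([set w; x] |: S)) w x by apply: connect1; rewrite /srel !inE eqxx.
  have xw : connect (srel ([set w; x] |: S)) x w.
    by apply: connect1; rewrite /srel !inE setUC eqxx.
  move=> a b; rewrite !inE => /orP[/eqP -> | aW] /orP[/eqP -> | bW].
  + exact: connect0.
  + exact: connect_trans xw (sub _ _ (con _ _ wW bW)).
  + exact: connect_trans (sub _ _ (con _ _ aW wW)) wx.
  + exact: sub _ _ (con _ _ aW bW).
Qed.

Lemma touch_add_le (T : finType) (e : rel T) col M W x :
  (forall x y, e x y -> col x != col y) -> matchingP e col M ->
  #|touch M (x |: W)| <= #|touch M W| + 1.
Proof.
move=> Hcol mM; apply: leq_trans (subset_leq_card (touch_add M W x)) _.
apply: leq_trans (leq_card_setU _ _) _; rewrite leq_add2l; exact: at_le1 Hcol mM.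
Qed.

Lemma grow (T : finType) (e : rel T) col M k :
  symmetric e -> (forall x y, e x y -> col x != col y) -> connected_graph e ->
  matchingP e col M -> 0 < k -> k <= #|T| -> exists W S, inv e M k W S.
Proof.
move=> Hsym Hcol Hc mM; elim: k => [//|k IH] _ kT.
case: k IH kT => [|k] IH kT.
  have : 0 < #|T| by [].
  case/card_gt0P => z _; exists [set z], set0; split.
  - exact: cards1.
  - by rewrite sub0set cards0.
  - by move=> s; rewrite inE.
  - by move=> x y; rewrite !inE => /eqP -> /eqP ->; exact: connect0.
  - have : touch M [set z] \subset [set p in M | (p.1 == z) || (p.2 == z)].
      by apply/subsetP => p; rewrite !inE.
    move/subset_leq_card => L; have := at_le1 z Hcol mM; lia.
have [W [S I]] := IH isT (ltnW kT).
have I' := I; case: I' => cW _ _ _ tW.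
have : 0 < #|W| by rewrite cW.
case/card_gt0P => w0 w0W.
have : 0 < #|~: W| by rewrite -(cardsC W) cW in kT; lia.
case/card_gt0P => z; rewrite inE => zW.
case: (pickP [pred p : T * T | (p \in M) && (((p.1 \in W) && (p.2 \notin W)) || ((p.2 \in W) && (p.1 \notin W)))]) => [p /= /andP[pM hp] | none].
  have [ep _] : e p.1 p.2 /\ col p.1 by case: mM => A _ _; exact: A.
  have pT : p \in touch M W by rewrite inE pM /=; case/orP: hp => /andP[-> _]; rewrite ?orbT.
  have key : forall y, y \notin W -> (p.1 == y) || (p.2 == y) ->
      2 * #|touch M (y |: W)| <= k.+2 + 1.
    move=> y yW py.
    have : touch M (y |: W) \subset touch M W.
      apply/subsetP => q qT; have := subsetP (touch_add M W y) q qT.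
      rewrite inE => /orP[//|]; rewrite inE => /andP[qM qy].
      by rewrite (uniq_pair Hcol mM qM pM qy py).
    move/subset_leq_card => L; lia.
  case/orP: hp => /andP[h1 h2].
  - exists (p.2 |: W), ([set p.1; p.2] |: S); apply: extend => //.
    by apply: key; rewrite ?eqxx ?orbT.
  - exists (p.1 |: W), ([set p.2; p.1] |: S); apply: extend => //; first by rewrite Hsym.
    by apply: key; rewrite ?eqxx ?orbT.
have tc : 2 * #|touch M W| <= #|W|.
  apply: touch_closed Hcol mM _ => p; rewrite inE => /andP[pM hp].
  have := none p; rewrite /= pM /=.
  by move: hp; case: (p.1 \in W); case: (p.2 \in W).
have [w [x [wW xW ewx]]] := crossing Hsym Hc w0W zW.
exists (x |: W), ([set w; x] |: S); apply: extend => //.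
have := touch_add_le W x Hcol mM; lia.
Qed.

Lemma match_bound (T : finType) (e : rel T) col M (J W : {set T}) :
  (forall x y, e x y -> col x != col y) -> matchingP e col M -> independent e J ->
  (forall x, x \in J -> x \notin W) ->
  #|J| + #|W| + #|M| <= #|T| + #|touch M W|.
Proof.
move=> Hcol mM Jind JW.
set t := touch M W; set Pout := M :\: t.
have tM : t \subset M by apply/subsetP => p; rewrite inE => /andP[].
have cM : #|M| = #|t| + #|Pout| by rewrite -(cardsID t M) (setIidPr tM).
pose g := fun p : T * T => if p.1 \in J then p.2 else p.1.
have PM : forall p, p \in Pout -> p \in M by move=> p; rewrite inE => /andP[].
have ig : {in Pout &, injective g}.
  move=> p q /PM pM /PM qM; rewrite /g.
  have [cp1 cp2] := col12 Hcol mM pM; have [cq1 cq2] := col12 Hcol mM qM.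
  case: mM => _ I1 I2.
  case: (p.1 \in J); case: (q.1 \in J) => E.
  - exact: I2.
  - by move: cq1; rewrite -E cp2.
  - by move: cp1; rewrite E cq2.
  - exact: I1.
have cG := card_in_imset ig.
set G := [set g p | p in Pout] in cG.
have d1 : J :&: W = set0.
  apply/setP => z; rewrite !inE; apply/negP => /andP[/JW /negP zW zW']; exact: zW.
have d2 : (J :|: W) :&: G = set0.
  apply/setP => z; rewrite !inE; apply/negP => /andP[hz /imsetP[p pP Ez]].
  have pM := PM _ pP.
  have [ep _] : e p.1 p.2 /\ col p.1 by case: mM => A _ _; exact: A.
  have pt : p \notin t by move: pP; rewrite inE => /andP[].
  have [n1 n2] : p.1 \notin W /\ p.2 \notin W.
    by move: pt; rewrite inE pM /= negb_or => /andP[].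
  move: hz; rewrite Ez /g; case: (boolP (p.1 \in J)) => h1.
  - rewrite (negbTE n2) orbF => h2; by have := indep_elim Jind h1 h2; rewrite ep.
  - by rewrite (negbTE h1) (negbTE n1).
have := cardsUI J W; rewrite d1 cards0 addn0 => E1.
have := cardsUI (J :|: W) G; rewrite d2 cards0 addn0 E1 cG => E2.
have := max_card (mem (J :|: W :|: G)); rewrite E2.
move: cM; set a := #|J|; set b := #|W|; set c := #|M|; set f := #|Pout|; set h := #|t|.
move=> *; lia.
Qed.

Lemma comp_char (T : finType) (e : rel T) M k (W : {set T}) S C :
  inv e M k W S -> C \in comps S -> C = W \/ exists x, x \notin W /\ C = [set x].
Proof.
case=> _ _ inS con _ /imsetP[x _ ->].
have sW : forall a b, srel S a b -> (a \in W) && (b \in W).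
  move=> a b /inS /subsetP H; by rewrite !H // !inE eqxx ?orbT.
case: (boolP (x \in W)) => xW.
  left; apply/setP => y; rewrite inE; apply/idP/idP => [H | yW]; last exact: con.
  have cl : closed (srel S) W by move=> a b /sW /andP[-> ->].
  by rewrite -(closed_connect cl H).
right; exists x; split => //; apply/setP => y; rewrite !inE; apply/idP/idP => [H | /eqP ->].
  have cl : closed (srel S) (pred1 x).
    move=> a b /sW /andP[aW bW]; rewrite !inE.
    have -> : (a == x) = false by apply/negP => /eqP E; rewrite -E aW in xW.
    have -> : (b == x) = false by apply/negP => /eqP E; rewrite -E bW in xW.
    done.
  have := closed_connect cl H; rewrite !inE eqxx => E; by rewrite -E.
exact: connect0.
Qed.

Theorem mainTheorem1 (T : finType) (e : rel T) (d : nat) :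
  simple_graph e -> 1 <= d ->
  connected_graph e -> bipartite e ->
  (2 * d + 2 <= #|T|)%N -> (d + 1 <= alpha e)%N ->
  exists S : {set {set T}},
    [/\ S \subset edges e, (#|S| <= 2 * d + 1)%N &
        (alpha_contr e S <= alpha e - d)%N].
Proof.
move=> [Hsym Hirr] d1 Hc [col Hcol] nT aT.
have [M [X [mM cX cXM]]] := @konig T col _ e (leqnn _) Hsym Hcol.
have aX : #|T| - #|M| <= alpha e.
  have : independent e (~: X).
    apply: indep_intro => x y; rewrite !inE => xX yX; apply/negP => /cX.
    by rewrite (negbTE xX) (negbTE yX).
  move/indep_le_alpha => H; have := cardsC X; lia.
have [W [S I]] := @grow T e col M (2 * d + 2) Hsym Hcol Hc mM (ltac:(by rewrite addn2)) nT.
have I' := I; case: I' => cW /andP[sS cS] inS con tW.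
exists S; split => //; first by lia.
apply/bigmax_leqP => Ic /andP[Isub /forallP Iind].
have nadj : forall C D, C \in Ic -> D \in Ic -> C != D -> ~~ cadj e C D.
  move=> C D CI DI CD; have := Iind C; rewrite CI /= => /forallP /(_ D).
  by rewrite DI CD.
pose J := [set x | (x \notin W) && ([set x] \in Ic)].
have JW : forall x, x \in J -> x \notin W by move=> x; rewrite inE => /andP[].
have Iin : Ic \subset W |: [set [set x] | x in J].
  apply/subsetP => C CI; have := comp_char I (subsetP Isub _ CI).
  case=> [E | [x [xW E]]]; first by rewrite E !inE eqxx.
  rewrite E in CI *; rewrite !inE; apply/orP; right; apply/imsetP; exists x => //.
  by rewrite inE xW CI.
have cadjI : forall (C D : {set T}) x y, x \in C -> y \in D -> e x y -> cadj e C D.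
  move=> C D x y xC yD exy; apply/existsP; exists x; rewrite xC /=.
  by apply/existsP; exists y; rewrite yD.
have Jind : independent e J.
  apply: indep_intro => x y; rewrite !inE => /andP[xW xI] /andP[yW yI]; apply/negP => exy.
  have xy : x != y by apply/eqP => E; rewrite E Hirr in exy.
  have : [set x] != [set y] by apply: contra xy => /eqP /set1_inj ->.
  move/(nadj _ _ xI yI); apply/negP/negPn.
  by apply: (cadjI _ _ x y); rewrite ?inE ?eqxx.
case: (boolP (W \in Ic)) => WI.
  have cI : #|Ic| <= 1 + #|J|.
    apply: leq_trans (subset_leq_card Iin) _; rewrite cardsU1.
    apply: leq_add; first by case: (_ \notin _).
    exact: leq_imset_card.
  have noadj : forall x w, x \in J -> w \in W -> ~~ e w x.
    move=> x w xJ wW; apply/negP => ewx.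
    have xI : [set x] \in Ic by move: xJ; rewrite inE => /andP[].
    have WX : W != [set x].
      apply/eqP => E; have := JW _ xJ; by rewrite E inE eqxx.
    by move: (nadj _ _ WI xI WX); rewrite (cadjI _ _ w x) // inE.
  pose B := [set z | col z].
  have cB := cardsID B W.
  have [X0 [X0W X0c X0i]] : exists X0 : {set T}, [/\ X0 \subset W, d + 1 <= #|X0| & independent e X0].
    case: (leqP (d + 1) #|W :&: B|) => h.
      exists (W :&: B); split => //; first exact: subsetIl.
      apply: indep_intro => x y; rewrite !inE => /andP[_ cx] /andP[_ cy]; apply/negP => /Hcol.
      by rewrite cx cy.
    exists (W :\: B); split; first exact: subsetDl.
      move: cB h; rewrite cW; move=> *; lia.
    apply: indep_intro => x y; rewrite !inE => /andP[cx _] /andP[cy _]; apply/negP => /Hcol.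
    by rewrite (negbTE cx) (negbTE cy).
  have Ki : independent e (J :|: X0).
    apply: indep_intro => x y; rewrite !in_setU => /orP[xJ | xX] /orP[yJ | yX].
    - exact: indep_elim Jind xJ yJ.
    - by rewrite Hsym; apply: noadj => //; exact: (subsetP X0W).
    - by apply: noadj => //; exact: (subsetP X0W).
    - exact: indep_elim X0i xX yX.
  have dJ : J :&: X0 = set0.
    apply/setP => z; rewrite in_setI in_set0; apply/negP => /andP[/JW zW /(subsetP X0W) zW'].
    by rewrite zW' in zW.
  have := cardsUI J X0; rewrite dJ cards0 addn0 => EK.
  have := indep_le_alpha Ki; rewrite EK => HK.
  move: cI HK X0c aT; move=> *; lia.
have cI : #|Ic| <= #|J|.
  apply: leq_trans _ (leq_imset_card (fun x => [set x]) J); apply: subset_leq_card.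
  apply/subsetP => C CI; have := subsetP Iin C CI; rewrite !inE => /orP[/eqP E | //].
  by rewrite -E CI in WI.
have := match_bound Hcol mM Jind JW.
move: cI aX tW cXM; rewrite cW; move=> *; lia.
Qed.
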